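(* Let $\mathbb F$ be a field, $F_1,\dots,F_m\in\mathbb F[x_1,\dots,x_n]$, and let $C(\vec x,\vec y)$ be an IPS certificate of unsatisfiability of $F_1=\dots=F_m=0$. Let $D=\max_i\deg_{y_i}C$, and let $t$ be the number of terms of $C$ viewed as a polynomial in $y_1,\dots,y_m$ with coefficients in $\mathbb F[\vec x]$. Suppose $C$ and each $F_i$ can be computed by algebraic circuits of size at most $s$. Then a Hilbert-like IPS certificate for this system can be computed by a circuit of size $\mathrm{poly}(D,t,n,s)$. If $|\mathbb F|<T=Dt\binom n2$ and the circuit for $C$ has multiplication gates of fan-in at most $k$, the size bound is instead $\mathrm{poly}(D,t,n,s)\cdot(\log T)^k$.
   Context: An IPS certificate of unsatisfiability of $F_1=\dots=F_m=0$ is a polynomial $C(\vec x,\vec y)\in\mathbb F[x_1,\dots,x_n,y_1,\dots,y_m]$ (placeholder variables $y_i$) with $C(\vec x,\vec 0)=0$ and $C(\vec x,F_1(\vec x),\dots,F_m(\vec x))=1$. It is Hilbert-like if it has the form $\sum_iy_iG_i(\vec x)$. *)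

(* Defs.v *)
From HB Require Import structures.
From mathcomp Require Import all_boot all_order all_algebra.
From mathcomp Require Import mpoly.
Set Implicit Arguments. Unset Strict Implicit. Unset Printing Implicit Defensive.
Import Order.TTheory GRing.Theory Num.Theory.
Local Open Scope ring_scope.

(* Algebraic circuits, as straight-line programs.                            *)
(* Gate number j (0-based, in list order) may only read gates with index < j.*)
(* Sum and product gates have unbounded fan-in (list of predecessor indices, *)
(* repetitions allowed). Constants are arbitrary field elements.            *)
Inductive gate (F : Type) : Type :=
  | GVar of nat
  | GConst of F
  | GAdd of seq nat
  | GMul of seq nat.

Definition circuit (F : Type) := seq (gate F).

Definition fanin (F : Type) (g : gate F) : nat :=
  match g with GAdd l | GMul l => size l | _ => 0%N end.

(* size = number of gates + number of wires (edges) *)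
Definition csize (F : Type) (c : circuit F) : nat :=
  \sum_(g <- c) (fanin g).+1.

Definition mul_fanin_le (F : Type) (k : nat) (c : circuit F) : bool :=
  all (fun g => if g is GMul l then (size l <= k)%N else true) c.

Definition gate_wf (F : Type) (N j : nat) (g : gate F) : bool :=
  match g with
  | GVar i => (i < N)%N
  | GConst _ => true
  | GAdd l | GMul l => all (fun i => (i < j)%N) l
  end.

Definition circuit_wf (F : Type) (N : nat) (c : circuit F) : bool :=
  (0 < size c)%N && all (fun p => gate_wf N p.2 p.1) (zip c (iota 0 (size c))).

Section Eval.
Variables (F : fieldType) (N : nat).

Definition var_poly (i : nat) : {mpoly F[N]} :=
  if insub i is Some j then 'X_j else 0.

Definition gate_val (vals : seq {mpoly F[N]}) (g : gate F) : {mpoly F[N]} :=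
  match g with
  | GVar i => var_poly i
  | GConst a => a%:MP
  | GAdd l => \sum_(j <- l) nth 0 vals j
  | GMul l => \prod_(j <- l) nth 0 vals j
  end.

Definition gate_values (c : circuit F) : seq {mpoly F[N]} :=
  foldl (fun vals g => rcons vals (gate_val vals g)) [::] c.

Definition circuit_poly (c : circuit F) : {mpoly F[N]} :=
  last 0 (gate_values c).

Definition computes (c : circuit F) (p : {mpoly F[N]}) : Prop :=
  circuit_wf N c /\ circuit_poly c = p.
End Eval.

(* IPS certificates.  Variables of {mpoly F[n + m]}: indices lshift m j      *)
(* (j < n) are x_{j+1}, indices rshift n i (i < m) are the placeholders      *)
(* y_{i+1}.                                                                   *)
Section IPS.
Variables (F : fieldType) (n m : nat).

Definition subst_y (v : 'I_m -> {mpoly F[n]}) : (n + m).-tuple {mpoly F[n]} :=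
  [tuple match split i with inl j => 'X_j | inr j => v j end | i < n + m].

Definition ips_certificate (Fs : 'I_m -> {mpoly F[n]}) (C : {mpoly F[n + m]})
  : Prop :=
  C \mPo subst_y (fun _ => 0) = 0 /\ C \mPo subst_y Fs = 1.

Definition x_embed (G : {mpoly F[n]}) : {mpoly F[n + m]} :=
  G \mPo [tuple 'X_(lshift m j) | j < n].

Definition hilbert_like (C : {mpoly F[n + m]}) : Prop :=
  exists G : 'I_m -> {mpoly F[n]},
    C = \sum_(i < m) 'X_(rshift n i) * x_embed (G i).

Definition deg_y (C : {mpoly F[n + m]}) (i : 'I_m) : nat :=
  \max_(mo <- msupp C) fun_of_multinom mo (rshift n i).

Definition max_deg_y (C : {mpoly F[n + m]}) : nat :=
  \max_(i < m) deg_y C i.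

(* number of terms of C as a polynomial in y with coefficients in F[x]:
   number of distinct y-exponent vectors among the monomials of C *)
Definition y_terms (C : {mpoly F[n + m]}) : nat :=
  size (undup [seq [seq fun_of_multinom mo (rshift n i) | i <- enum 'I_m] | mo <- msupp C]).
End IPS.

Definition card_ge (F : eqType) (T : nat) : Prop :=
  exists s : seq F, (uniq s /\ T <= size s)%N.

(* Main.v *)
Require Import Defs.
From HB Require Import structures.
From mathcomp Require Import all_boot all_order all_algebra.
From mathcomp Require Import mpoly.
From mathcomp Require Import zify ring.
Set Implicit Arguments. Unset Strict Implicit. Unset Printing Implicit Defensive.
Import Order.TTheory GRing.Theory Num.Theory.
Local Open Scope ring_scope.

Arguments GVar {F} _.
Arguments GConst {F} _.
Arguments GAdd {F} _.
Arguments GMul {F} _.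

Section Gen.
Variables (F : fieldType) (N : nat).
Implicit Types (c e : circuit F) (g : gate F).

Definition wfall (c : circuit F) :=
  all (fun p => gate_wf N p.2 p.1) (zip c (iota 0 (size c))).

Lemma wfall_rcons c g : wfall (rcons c g) = wfall c && gate_wf N (size c) g.
Proof.
rewrite /wfall size_rcons -addn1 iotaD add0n -cats1 zip_cat ?size_iota //.
by rewrite all_cat /= andbT.
Qed.

Lemma wfall_nil : wfall [::]. Proof. by []. Qed.

Lemma gv_rcons c g : gate_values N (rcons c g) =
  rcons (gate_values N c) (gate_val (gate_values N c) g).
Proof. by rewrite /gate_values foldl_rcons. Qed.

Lemma size_gv c : size (gate_values N c) = size c.
Proof.
elim/last_ind: c => [//|c g IH]; by rewrite gv_rcons !size_rcons IH.
Qed.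

Definition val (c : circuit F) k := nth 0 (gate_values N c) k.

Lemma val_rcons_lt c g k : (k < size c)%N -> val (rcons c g) k = val c k.
Proof. by move=> h; rewrite /val gv_rcons nth_rcons size_gv h. Qed.

Lemma val_rcons_eq c g : val (rcons c g) (size c) = gate_val (gate_values N c) g.
Proof. by rewrite /val gv_rcons nth_rcons size_gv ltnn eqxx. Qed.

Lemma val_cat_lt c e k : (k < size c)%N -> val (c ++ e) k = val c k.
Proof.
elim/last_ind: e => [|e g IH] h; first by rewrite cats0.
by rewrite -rcons_cat val_rcons_lt ?IH // size_cat; lia.
Qed.

Lemma wfall_cat_l c e : wfall (c ++ e) -> wfall c.
Proof.
elim/last_ind: e => [|e g IH]; first by rewrite cats0.
by rewrite -rcons_cat wfall_rcons => /andP[/IH].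
Qed.

Lemma val_add2 c (X Y : nat) : val (rcons c (GAdd [:: X; Y])) (size c) = val c X + val c Y.
Proof. by rewrite val_rcons_eq /= !big_cons big_nil addr0. Qed.

Lemma val_mul2 c (X Y : nat) : val (rcons c (GMul [:: X; Y])) (size c) = val c X * val c Y.
Proof. by rewrite val_rcons_eq /= !big_cons big_nil mulr1. Qed.

Lemma csize_rcons c g : csize (rcons c g) = (csize c + (fanin g).+1)%N.
Proof. by rewrite /csize -cats1 big_cat big_seq1. Qed.

Lemma csize_nil : csize ([::] : circuit F) = 0%N.
Proof. by rewrite /csize big_nil. Qed.

Lemma csize_cat c e : csize (c ++ e) = (csize c + csize e)%N.
Proof. by rewrite /csize big_cat. Qed.

End Gen.
Section Shift.
Variables (F : fieldType) (n m : nat).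
Implicit Types (c d : circuit F) (g : gate F).

Definition shiftg (o : nat) g : gate F :=
  match g with
  | GAdd l => GAdd (map (addn o) l)
  | GMul l => GMul (map (addn o) l)
  | g => g end.

Lemma xe_X (j : 'I_n) : x_embed m ('X_j : {mpoly F[n]}) = 'X_(lshift m j).
Proof. by rewrite /x_embed comp_mpolyXU -tnth_nth tnth_mktuple. Qed.

Lemma xe_C a : x_embed m (a%:MP : {mpoly F[n]}) = a%:MP.
Proof. by rewrite /x_embed comp_mpolyC. Qed.

Lemma var_embed i : (i < n)%N -> var_poly F (n + m) i = x_embed m (var_poly F n i).
Proof.
move=> hi; have hi' : (i < n + m)%N by lia.
rewrite /var_poly (insubT (fun k => k < n)%N hi) (insubT (fun k => k < n + m)%N hi') xe_X; by congr (mpolyX _ U_(_)); exact: val_inj.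
Qed.

Lemma nth_cat_shift c (s : seq {mpoly F[n+m]}) j :
  nth 0 (gate_values (n + m) c ++ s) (size c + j) = nth 0 s j.
Proof. by rewrite nth_cat size_gv ltnNge leq_addr /= addKn. Qed.

Lemma gv_shift c d : wfall n d ->
  gate_values (n + m) (c ++ map (shiftg (size c)) d) =
  gate_values (n + m) c ++ map (x_embed m) (gate_values n d).
Proof.
elim/last_ind: d => [|d g IH]; first by rewrite !cats0.
rewrite wfall_rcons => /andP[wd wg].
rewrite map_rcons -rcons_cat !gv_rcons IH // map_rcons -rcons_cat; congr rcons.
case: g wg => [i|a|l|l] /= wg.
- exact: var_embed.
- by rewrite xe_C.
- rewrite big_map /x_embed raddf_sum /= big_seq [RHS]big_seq; apply: eq_bigr => j jl.
  rewrite nth_cat_shift (nth_map 0) // size_gv; exact: (allP wg).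
- rewrite big_map /x_embed rmorph_prod /= big_seq [RHS]big_seq; apply: eq_bigr => j jl.
  rewrite nth_cat_shift (nth_map 0) // size_gv; exact: (allP wg).
Qed.

Lemma wfall_shift c d : wfall (n + m) c -> wfall n d ->
  wfall (n + m) (c ++ map (shiftg (size c)) d).
Proof.
move=> wc; elim/last_ind: d => [|d g IH]; first by rewrite !cats0.
rewrite wfall_rcons => /andP[wd wg].
rewrite map_rcons -rcons_cat wfall_rcons IH //= size_cat size_map.
case: g wg => [i|a|l|l] /=; first (by lia); first by [].
- rewrite all_map => /allP h; apply/allP => j /h /=; lia.
- rewrite all_map => /allP h; apply/allP => j /h /=; lia.
Qed.

Lemma csize_shift o d : csize (map (shiftg o) d) = csize d.
Proof.
rewrite /csize big_map; apply: eq_bigr => -[i|a|l|l] _ //=; by rewrite size_map.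
Qed.

End Shift.
Lemma comp_mpolyA (F : fieldType) (a b c : nat) (p : {mpoly F[a]})
  (t : a.-tuple {mpoly F[b]}) (u : b.-tuple {mpoly F[c]}) :
  (p \mPo t) \mPo u = p \mPo [tuple (tnth t i) \mPo u | i < a].
Proof.
rewrite (comp_mpolyE p t) raddf_sum /= (comp_mpolyE p); apply: eq_bigr => mo _.
rewrite comp_mpolyZ rmorph_prod /=; congr (_ *: _); apply: eq_bigr => i _.
by rewrite rmorphXn /= tnth_mktuple.
Qed.

Section Sem.
Variables (F : fieldType) (n m : nat).

Lemma subst_yl (v : 'I_m -> {mpoly F[n]}) (j : 'I_n) :
  'X_(lshift m j) \mPo subst_y v = 'X_j.
Proof.
rewrite comp_mpolyXU -tnth_nth tnth_mktuple.
by rewrite (unsplitK (inl j : 'I_n + 'I_m)).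
Qed.

Lemma subst_yr (v : 'I_m -> {mpoly F[n]}) (i : 'I_m) :
  'X_(rshift n i) \mPo subst_y v = v i.
Proof.
rewrite comp_mpolyXU -tnth_nth tnth_mktuple.
by rewrite (unsplitK (inr i : 'I_n + 'I_m)).
Qed.

Lemma subst_xe (v : 'I_m -> {mpoly F[n]}) (G : {mpoly F[n]}) :
  x_embed m G \mPo subst_y v = G.
Proof.
rewrite /x_embed comp_mpolyA -[RHS]comp_mpoly_id; congr comp_mpoly.
apply: eq_from_tnth => j; rewrite !tnth_mktuple; exact: subst_yl.
Qed.

End Sem.
Lemma val_add2k (F : fieldType) N (c : circuit F) (X Y k : nat) : k = size c ->
  val N (rcons c (GAdd [:: X; Y])) k = val N c X + val N c Y.
Proof. by move=> ->; rewrite val_add2. Qed.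
Lemma val_mul2k (F : fieldType) N (c : circuit F) (X Y k : nat) : k = size c ->
  val N (rcons c (GMul [:: X; Y])) k = val N c X * val N c Y.
Proof. by move=> ->; rewrite val_mul2. Qed.
Lemma val_rcons_eqk (F : fieldType) N (c : circuit F) g k : k = size c ->
  val N (rcons c g) k = gate_val (gate_values N c) g.
Proof. by move=> ->; rewrite val_rcons_eq. Qed.

Section Comp.
Variables (F : fieldType) (n m : nat) (Fs : 'I_m -> {mpoly F[n]}).
Local Notation N := (n + m)%N.
Implicit Types (c : circuit F).

Definition Hform (G : 'I_m -> {mpoly F[n]}) : {mpoly F[n + m]} :=
  \sum_(i < m) 'X_(rshift n i) * x_embed m (G i).

Definition Good c (t : nat * nat * nat) (ab : {mpoly F[n]} * {mpoly F[n]}) : Prop :=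
  let: (A, B, H) := t in
  [/\ [&& (A < size c)%N, (B < size c)%N & (H < size c)%N],
   val N c A = x_embed m ab.1, val N c B = x_embed m ab.2 &
   exists G, val N c H = Hform G /\ \sum_(i < m) Fs i * G i = ab.2 - ab.1].

Lemma Good_cat c e t ab : Good c t ab -> Good (c ++ e) t ab.
Proof.
case: t => [[A B] H] [/and3P[hA hB hH] vA vB [G [vH sG]]].
rewrite /Good size_cat !val_cat_lt //; split => //; first (apply/and3P; split; lia).
by exists G.
Qed.

Lemma Good_rcons c g t ab : Good c t ab -> Good (rcons c g) t ab.
Proof. rewrite -cats1; exact: Good_cat. Qed.

Lemma HformD G1 G2 : Hform (fun i => G1 i + G2 i) = Hform G1 + Hform G2.
Proof.
rewrite /Hform -big_split /=; apply: eq_bigr => i _.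
by rewrite /x_embed raddfD /= mulrDr.
Qed.

Lemma HformMr G b : Hform (fun i => G i * b) = Hform G * x_embed m b.
Proof.
rewrite /Hform mulr_suml; apply: eq_bigr => i _.
by rewrite /x_embed rmorphM /= mulrA.
Qed.

Lemma HformMl G a : Hform (fun i => a * G i) = x_embed m a * Hform G.
Proof.
rewrite /Hform mulr_sumr; apply: eq_bigr => i _.
by rewrite /x_embed rmorphM /= mulrCA.
Qed.

Lemma Hform0 : Hform (fun _ => 0) = 0.
Proof. by rewrite /Hform big1 // => i _; rewrite /x_embed raddf0 mulr0. Qed.

Lemma xeD (a b : {mpoly F[n]}) : x_embed m (a + b) = x_embed m a + x_embed m b.
Proof. by rewrite /x_embed raddfD. Qed.
Lemma xeM (a b : {mpoly F[n]}) : x_embed m (a * b) = x_embed m a * x_embed m b.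
Proof. by rewrite /x_embed rmorphM. Qed.

Definition add_blk c (A B H a b h : nat) :=
  rcons (rcons (rcons c (GAdd [:: A; a])) (GAdd [:: B; b])) (GAdd [:: H; h]).

Lemma add_step c A B H a b h al be alj bej :
  wfall N c -> Good c (A, B, H) (al, be) -> Good c (a, b, h) (alj, bej) ->
  let c' := add_blk c A B H a b h in
  [/\ wfall N c', Good c' (size c, (size c).+1, (size c).+2) (al + alj, be + bej)
    & csize c' = (csize c + 9)%N].
Proof.
move=> wc [/and3P[hA hB hH] vA vB [G [vH sG]]] [/and3P[ha hb hh] va vb [Gj [vh sGj]]] /=.
rewrite /add_blk; split.
- rewrite !wfall_rcons wc /= !size_rcons; repeat (apply/andP; split); try done; lia.
- rewrite /Good !size_rcons; split => //.
  + repeat (apply/andP; split); lia.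
  + rewrite val_rcons_lt; last by rewrite !size_rcons; lia.
    rewrite val_rcons_lt; last by rewrite !size_rcons; lia.
    by rewrite val_add2 va vA xeD.
  + rewrite val_rcons_lt ?size_rcons //; try lia.
    rewrite val_add2k ?size_rcons // !val_rcons_lt //.
    by rewrite vb vB xeD.
  + rewrite val_add2k ?size_rcons // !val_rcons_lt ?size_rcons //; try lia.
    exists (fun i => G i + Gj i); split; first by rewrite vH vh HformD.
    rewrite (eq_bigr (fun i => Fs i * G i + Fs i * Gj i)) => [|i _]; last by rewrite mulrDr.
    rewrite big_split /= sG sGj /=; ring.
- by rewrite !csize_rcons /=; lia.
Qed.

End Comp.
Section Comp2.
Variables (F : fieldType) (n m : nat) (Fs : 'I_m -> {mpoly F[n]}).
Local Notation N := (n + m)%N.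
Implicit Types (c : circuit F).

Lemma wfall_cat c e : wfall N (c ++ e) =
  wfall N c && all (fun p => gate_wf N p.2 p.1) (zip e (iota (size c) (size e))).
Proof.
by rewrite /wfall size_cat iotaD add0n zip_cat ?size_iota // all_cat.
Qed.

Lemma gv_cat c s : gate_values N (c ++ s) =
  foldl (fun vals g => rcons vals (gate_val vals g)) (gate_values N c) s.
Proof. by rewrite /gate_values foldl_cat. Qed.

Lemma nth_gv_new c s i : nth 0 (gate_values N c ++ s) (size c + i) = nth 0 s i.
Proof. by rewrite nth_cat size_gv ltnNge leq_addr /= addKn. Qed.

Lemma nth_gv_old c s k : (k < size c)%N ->
  nth 0 (gate_values N c ++ s) k = val N c k.
Proof. by move=> h; rewrite nth_cat size_gv h. Qed.

Definition mul_blk c (A B H a b h : nat) :=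
  c ++ [:: GMul [:: A; a]; GMul [:: B; b]; GMul [:: H; b]; GMul [:: A; h];
           GAdd [:: size c + 2; size c + 3]]%N.

Lemma mul_step c A B H a b h al be alj bej :
  wfall N c -> Good Fs c (A, B, H) (al, be) -> Good Fs c (a, b, h) (alj, bej) ->
  let c' := mul_blk c A B H a b h in
  [/\ wfall N c', Good Fs c' (size c, size c + 1, size c + 4)%N (al * alj, be * bej)
    & csize c' = (csize c + 15)%N].
Proof.
move=> wc [/and3P[hA hB hH] vA vB [G [vH sG]]] [/and3P[ha hb hh] va vb [Gj [vh sGj]]] /=.
have gv : gate_values N (mul_blk c A B H a b h) = gate_values N c ++
  [:: val N c A * val N c a; val N c B * val N c b; val N c H * val N c b;
      val N c A * val N c h; val N c H * val N c b + val N c A * val N c h].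
  rewrite /mul_blk gv_cat /= -!cats1 -!catA /=.
  rewrite !big_cons !big_nil !mulr1 !addr0 !nth_gv_new /= !nth_gv_old //.
have sz : size (mul_blk c A B H a b h) = (size c + 5)%N by rewrite size_cat.
split.
- rewrite /mul_blk wfall_cat wc /=; repeat (apply/andP; split); try done; lia.
- rewrite /Good sz /val gv; split.
  + repeat (apply/andP; split); lia.
  + by rewrite -[size c]addn0 nth_gv_new /= va vA xeM.
  + by rewrite nth_gv_new /= vb vB xeM.
  + rewrite nth_gv_new /= vb vH vA vh -HformMr -HformMl -HformD.
    eexists; split; first reflexivity.
    rewrite (eq_bigr (fun i => (Fs i * G i) * bej + al * (Fs i * Gj i))) => [|i _]; last by simpl; ring.
    rewrite big_split /= -mulr_suml -mulr_sumr sG sGj /=; ring.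
- by rewrite /mul_blk csize_cat /csize !big_cons big_nil /=; lia.
Qed.
End Comp2.
Section Folds.
Variables (F : fieldType) (n m : nat) (Fs : 'I_m -> {mpoly F[n]}).
Local Notation N := (n + m)%N.
Implicit Types (c : circuit F).
Definition t0 : nat * nat * nat := (0, 0, 0)%N.

Fixpoint add_steps (tr : seq (nat * nat * nat)) c (A B H : nat) (l : seq nat)
  : circuit F * (nat * nat * nat) :=
  match l with
  | [::] => (c, (A, B, H))
  | j :: l' => let: (a, b, h) := nth t0 tr j in
      add_steps tr (add_blk c A B H a b h) (size c) (size c).+1 (size c).+2 l'
  end.

Fixpoint mul_steps (tr : seq (nat * nat * nat)) c (A B H : nat) (l : seq nat)
  : circuit F * (nat * nat * nat) :=
  match l with
  | [::] => (c, (A, B, H))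
  | j :: l' => let: (a, b, h) := nth t0 tr j in
      mul_steps tr (mul_blk c A B H a b h) (size c) (size c + 1)%N (size c + 4)%N l'
  end.

Lemma add_steps_ok tr (ab : nat -> {mpoly F[n]} * {mpoly F[n]}) l :
  forall c A B H al be,
  wfall N c -> Good Fs c (A, B, H) (al, be) ->
  (forall j, j \in l -> Good Fs c (nth t0 tr j) (ab j)) ->
  [/\ wfall N (add_steps tr c A B H l).1,
      exists e, (add_steps tr c A B H l).1 = c ++ e,
      Good Fs (add_steps tr c A B H l).1 (add_steps tr c A B H l).2
        (al + \sum_(j <- l) (ab j).1, be + \sum_(j <- l) (ab j).2)
    & csize (add_steps tr c A B H l).1 = (csize c + 9 * size l)%N].
Proof.
elim: l => [|j l IH] c A B H al be wc gc gl /=.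
  by rewrite !big_nil !addr0 muln0 addn0; split => //; exists [::]; rewrite cats0.
case E: (nth t0 tr j) => [[a b] h].
have gj := gl j (mem_head _ _); rewrite E in gj.
case E2: (ab j) gj => [alj bej] gj.
have [w1 g1 s1] := add_step wc gc gj.
have ec : add_blk c A B H a b h = c ++ [:: GAdd [:: A; a]; GAdd [:: B; b]; GAdd [:: H; h]].
  by rewrite /add_blk -!cats1 -!catA.
rewrite ec in w1 g1 s1 *.
have gl' : forall k, k \in l -> Good Fs (c ++ [:: GAdd [:: A; a]; GAdd [:: B; b]; GAdd [:: H; h]]) (nth t0 tr k) (ab k).
  by move=> k kl; apply: Good_cat; apply: gl; rewrite inE kl orbT.
have [w2 [e2 ee2] g2 s2] := IH _ _ _ _ _ _ w1 g1 gl'.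
split => //.
- by exists ([:: GAdd [:: A; a]; GAdd [:: B; b]; GAdd [:: H; h]] ++ e2); rewrite ee2 catA.
- by rewrite !big_cons E2 /= !addrA.
- by rewrite s2 s1 /=; lia.
Qed.

Lemma mul_steps_ok tr (ab : nat -> {mpoly F[n]} * {mpoly F[n]}) l :
  forall c A B H al be,
  wfall N c -> Good Fs c (A, B, H) (al, be) ->
  (forall j, j \in l -> Good Fs c (nth t0 tr j) (ab j)) ->
  [/\ wfall N (mul_steps tr c A B H l).1,
      exists e, (mul_steps tr c A B H l).1 = c ++ e,
      Good Fs (mul_steps tr c A B H l).1 (mul_steps tr c A B H l).2
        (al * \prod_(j <- l) (ab j).1, be * \prod_(j <- l) (ab j).2)
    & csize (mul_steps tr c A B H l).1 = (csize c + 15 * size l)%N].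
Proof.
elim: l => [|j l IH] c A B H al be wc gc gl /=.
  by rewrite !big_nil !mulr1 muln0 addn0; split => //; exists [::]; rewrite cats0.
case E: (nth t0 tr j) => [[a b] h].
have gj := gl j (mem_head _ _); rewrite E in gj.
case E2: (ab j) gj => [alj bej] gj.
have [w1 g1 s1] := mul_step wc gc gj.
have gl' : forall k, k \in l -> Good Fs (mul_blk c A B H a b h) (nth t0 tr k) (ab k).
  by move=> k kl; apply: Good_cat; apply: gl; rewrite inE kl orbT.
have [w2 [e2 ee2] g2 s2] := IH _ _ _ _ _ _ w1 g1 gl'.
split => //.
- by eexists; rewrite ee2 /mul_blk -catA.
- by rewrite !big_cons E2 /= !mulrA.
- by rewrite s2 s1 /=; lia.
Qed.
End Folds.
Section Main.
Variables (F : fieldType) (n m : nat) (Fs : 'I_m -> {mpoly F[n]}).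
Variables (cFs : 'I_m -> circuit F) (s : nat).
Hypothesis hF : forall i, [/\ circuit_wf n (cFs i), circuit_poly n (cFs i) = Fs i
                                & (csize (cFs i) <= s)%N].
Local Notation N := (n + m)%N.
Implicit Types (c d : circuit F).

Definition cFo (k : nat) : circuit F := if insub k is Some o then cFs o else [::].

Definition cgate c (tr : seq (nat * nat * nat)) (g : gate F) : circuit F * (nat * nat * nat) :=
  match g with
  | GVar i => if (i < n)%N then
        (rcons (rcons c (GVar i)) (GConst 0), (size c, size c, (size c).+1))
      else let c1 := c ++ map (shiftg (size c)) (cFo (i - n)) in
        (rcons (rcons c1 (GConst 0)) (GVar i), (size c1, (size c1).-1, (size c1).+1))
  | GConst a => (rcons (rcons c (GConst a)) (GConst 0), (size c, size c, (size c).+1))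
  | GAdd l => add_steps tr (rcons c (GConst 0)) (size c) (size c) (size c) l
  | GMul l => mul_steps tr (rcons (rcons c (GConst 1)) (GConst 0)) (size c) (size c) (size c).+1 l
  end.

Definition sem2 (v : {mpoly F[N]}) := (v \mPo subst_y (fun _ => 0), v \mPo subst_y Fs).

Lemma Hform_delta (o : 'I_m) :
  Hform (fun i => if i == o then 1 else 0) = 'X_(rshift n o) :> {mpoly F[N]}.
Proof.
rewrite /Hform (bigD1 o) //= eqxx /x_embed rmorph1 mulr1 big1 ?addr0 // => i /negbTE ->.
by rewrite raddf0 mulr0.
Qed.

Lemma sum_delta (o : 'I_m) :
  \sum_(i < m) Fs i * (if i == o then 1 else 0) = Fs o.
Proof.
rewrite (bigD1 o) //= eqxx mulr1 big1 ?addr0 // => i /negbTE ->; by rewrite mulr0.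
Qed.

Lemma xe0 : x_embed m (0 : {mpoly F[n]}) = 0.
Proof. by rewrite /x_embed raddf0. Qed.

Lemma cgate_ok c tr d g : wfall N c -> size tr = size d ->
  (forall j, (j < size d)%N -> Good Fs c (nth t0 tr j) (sem2 (val N d j))) ->
  gate_wf N (size d) g ->
  [/\ wfall N (cgate c tr g).1, exists e, (cgate c tr g).1 = c ++ e,
      Good Fs (cgate c tr g).1 (cgate c tr g).2 (sem2 (gate_val (gate_values N d) g))
    & (csize (cgate c tr g).1 <= csize c + (s + 15) * (fanin g).+1)%N].
Proof.
move=> wc str gd; case: g => [i|a|l|l] /= wg.
- case: ifP => hin.
  + split.
    * by rewrite !wfall_rcons wc /= wg.
    * by eexists; rewrite -!cats1 -catA.
    * rewrite /Good !size_rcons; split.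
      - repeat (apply/andP; split); lia.
      - rewrite val_rcons_lt ?size_rcons // val_rcons_eq /= var_embed //.
        by rewrite /sem2 /= subst_xe.
      - rewrite val_rcons_lt ?size_rcons // val_rcons_eq /= var_embed //.
        by rewrite /sem2 /= subst_xe.
      - exists (fun _ => 0); split.
          by rewrite -(size_rcons c (GVar i)) val_rcons_eq /= Hform0.
        by rewrite /sem2 /= var_embed // !subst_xe subrr big1 // => j _; rewrite mulr0.
    * by rewrite !csize_rcons /=; lia.
  + have hk : (i - n < m)%N by lia.
    set o := Ordinal hk.
    have ecF : cFo (i - n) = cFs o by rewrite /cFo (insubT (fun k => k < m)%N hk).
    have [wF pF sF] := hF o.
    have szF : (0 < size (cFs o))%N by case/andP: wF.
    rewrite ecF.
    set c1 := c ++ _.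
    have wF' : wfall n (cFs o) by case/andP: wF.
    have wc1 : wfall N c1 by apply: wfall_shift.
    have sc1 : size c1 = (size c + size (cFs o))%N by rewrite size_cat size_map.
    have vi : var_poly F N i = 'X_(rshift n o).
      rewrite /var_poly (insubT (fun k => k < n + m)%N wg).
      by congr (mpolyX _ U_(_)); apply: val_inj => /=; lia.
    split.
    * by rewrite !wfall_rcons wc1 /= wg.
    * by eexists; rewrite -!cats1 -!catA.
    * rewrite /Good !size_rcons; split.
      - repeat (apply/andP; split); lia.
      - rewrite val_rcons_lt ?size_rcons // val_rcons_eq /= vi /sem2 /= subst_yr.
        by rewrite xe0 mpolyC0.
      - rewrite val_rcons_lt ?size_rcons; last by lia.
        rewrite val_rcons_lt; last by lia.
        rewrite /val gv_shift // sc1 nth_cat size_gv ifF; last by lia.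
        have -> : ((size c + size (cFs o)).-1 - size c = (size (gate_values n (cFs o))).-1)%N
          by rewrite size_gv; lia.
        rewrite (nth_map 0) ?size_gv; last by lia.
        rewrite -(size_gv n (cFs o)) nth_last.
        change (last 0 _) with (circuit_poly n (cFs o)).
        by rewrite pF /sem2 /= vi subst_yr.
      - exists (fun j => if j == o then 1 else 0); split.
          by rewrite -(size_rcons c1 (GConst 0)) val_rcons_eq /= vi Hform_delta.
        by rewrite sum_delta /sem2 /= vi !subst_yr subr0.
    * rewrite !csize_rcons csize_cat csize_shift /=; lia.
- split.
  + by rewrite !wfall_rcons wc.
  + by eexists; rewrite -!cats1 -catA.
  + rewrite /Good !size_rcons; split.
    * repeat (apply/andP; split); lia.
    * by rewrite val_rcons_lt ?size_rcons // val_rcons_eq /= /sem2 /= comp_mpolyC xe_C.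
    * by rewrite val_rcons_lt ?size_rcons // val_rcons_eq /= /sem2 /= comp_mpolyC xe_C.
    * exists (fun _ => 0); split.
        by rewrite -(size_rcons c (GConst a)) val_rcons_eq /= Hform0.
      by rewrite /sem2 /= !comp_mpolyC subrr big1 // => j _; rewrite mulr0.
  + by rewrite !csize_rcons /=; lia.
- have wc0 : wfall N (rcons c (GConst 0)) by rewrite wfall_rcons wc.
  have g0 : Good Fs (rcons c (GConst 0)) (size c, size c, size c) (0, 0).
    rewrite /Good size_rcons val_rcons_eq /= xe0 mpolyC0; split => //.
    - repeat (apply/andP; split); lia.
    - by exists (fun _ => 0); rewrite Hform0 /= subrr big1 // => j _; rewrite mulr0.
  have gl : forall j, j \in l -> Good Fs (rcons c (GConst 0)) (nth t0 tr j) (sem2 (val N d j)).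
    by move=> j jl; apply: Good_rcons; apply: gd; exact: (allP wg).
  have [w1 [e1 ee1] g1 s1] := add_steps_ok wc0 g0 gl.
  split => //.
  + by exists (GConst 0 :: e1); rewrite ee1 -cats1 -catA.
  + rewrite /sem2 !raddf_sum /= !add0r in g1 *; exact: g1.
  + by rewrite s1 csize_rcons /=; nia.
- have wc0 : wfall N (rcons (rcons c (GConst 1)) (GConst 0)) by rewrite !wfall_rcons wc.
  have g0 : Good Fs (rcons (rcons c (GConst 1)) (GConst 0)) (size c, size c, (size c).+1) (1, 1).
    rewrite /Good !size_rcons; split.
    - repeat (apply/andP; split); lia.
    - by rewrite val_rcons_lt ?size_rcons // val_rcons_eq /= /x_embed comp_mpoly1 rmorph1.
    - by rewrite val_rcons_lt ?size_rcons // val_rcons_eq /= /x_embed comp_mpoly1 rmorph1.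
    - exists (fun _ => 0); rewrite -(size_rcons c (GConst 1)) val_rcons_eq /= Hform0.
      by split => //; rewrite /= subrr big1 // => j _; rewrite mulr0.
  have gl : forall j, j \in l -> Good Fs (rcons (rcons c (GConst 1)) (GConst 0)) (nth t0 tr j) (sem2 (val N d j)).
    by move=> j jl; do 2 apply: Good_rcons; apply: gd; exact: (allP wg).
  have [w1 [e1 ee1] g1 s1] := mul_steps_ok wc0 g0 gl.
  split => //.
  + by exists ([:: GConst 1; GConst 0] ++ e1); rewrite ee1 -!cats1 -!catA.
  + rewrite /sem2 !rmorph_prod /= !mul1r in g1 *; exact: g1.
  + by rewrite s1 !csize_rcons /=; nia.
Qed.
End Main.
Section Compile.
Variables (F : fieldType) (n m : nat) (Fs : 'I_m -> {mpoly F[n]}).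
Variables (cFs : 'I_m -> circuit F) (s : nat).
Hypothesis hF : forall i, [/\ circuit_wf n (cFs i), circuit_poly n (cFs i) = Fs i
                                & (csize (cFs i) <= s)%N].
Local Notation N := (n + m)%N.
Implicit Types (c d : circuit F).

Definition cstep (st : circuit F * seq (nat * nat * nat)) (g : gate F) :=
  ((cgate n cFs st.1 st.2 g).1, rcons st.2 (cgate n cFs st.1 st.2 g).2).

Definition compile d := foldl cstep ([::], [::]) d.

Lemma compile_ok d : wfall N d ->
  [/\ wfall N (compile d).1, size (compile d).2 = size d,
      forall j, (j < size d)%N ->
        Good Fs (compile d).1 (nth t0 (compile d).2 j) (sem2 Fs (val N d j))
    & (csize (compile d).1 <= (s + 15) * csize d)%N].
Proof.
elim/last_ind: d => [|d g IH].
  have -> : compile [::] = ([::], [::]) by [].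
  by move=> _; split => //; rewrite csize_nil.
rewrite wfall_rcons => /andP[wd wg].
have [w sz G cs] := IH wd.
rewrite /compile foldl_rcons -/(compile d).
have [w1 [e ee] g1 s1] := cgate_ok hF w sz G wg.
split => //.
- by rewrite /= !size_rcons sz.
- move=> j; rewrite size_rcons ltnS leq_eqVlt => /orP[/eqP ->|jl] /=.
  + by rewrite nth_rcons sz ltnn eqxx /val gv_rcons nth_rcons size_gv ltnn eqxx.
  + rewrite nth_rcons sz jl ee; apply: Good_cat.
    by rewrite val_rcons_lt //; apply: G.
- rewrite /= csize_rcons; nia.
Qed.
End Compile.

From Stdlib Require Import ClassicalEpsilon.

Lemma core (F : fieldType) (n m : nat) (Fs : 'I_m -> {mpoly F[n]})
         (C : {mpoly F[n + m]}) (s : nat) :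
    ips_certificate Fs C ->
    (forall i : 'I_m, exists cF : circuit F, computes cF (Fs i) /\ (csize cF <= s)%N) ->
    (exists cC : circuit F, computes cC C /\ (csize cC <= s)%N) ->
     exists (H : {mpoly F[n + m]}) (cH : circuit F),
       hilbert_like H /\ ips_certificate Fs H /\
       computes cH H /\ (csize cH <= 15 * (s + 1) ^ 2)%N.
Proof.
move=> [C0 C1] hFs [cC [[wC pC] sC]].
pose cFs i := proj1_sig (constructive_indefinite_description _ (hFs i)).
have hF : forall i, [/\ circuit_wf n (cFs i), circuit_poly n (cFs i) = Fs i
                       & (csize (cFs i) <= s)%N].
  move=> i; have [[w p] sz] := proj2_sig (constructive_indefinite_description _ (hFs i)).
  by split.
have wC' : wfall (n + m) cC by case/andP: wC.
have szC : (0 < size cC)%N by case/andP: wC.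
have [w sz G cs] := compile_ok hF wC'.
set c := (compile n cFs cC).1 in w G cs.
set tr := (compile n cFs cC).2 in sz G.
have := G (size cC).-1 ltac:(lia).
case: (nth t0 tr (size cC).-1) => [[a b] h] [/and3P[_ _ hh] _ _ [Gh [vh sGh]]].
have eC : val (n + m) cC (size cC).-1 = C.
  by rewrite /val -(size_gv (n + m) cC) nth_last.
rewrite eC /sem2 /= C0 C1 subr0 in sGh.
pose cH := rcons c (GAdd [:: h]).
have vH : circuit_poly (n + m) cH = Hform Gh.
  rewrite /circuit_poly /cH gv_rcons last_rcons /= big_cons big_nil addr0.
  exact: vh.
exists (circuit_poly (n + m) cH), cH; split; last split; last split.
- by exists Gh; rewrite vH.
- rewrite vH /Hform; split.
  + rewrite raddf_sum /= big1 // => i _.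
    by rewrite rmorphM /= subst_yr subst_xe mul0r.
  + rewrite raddf_sum /= -sGh; apply: eq_bigr => i _.
    by rewrite rmorphM /= subst_yr subst_xe.
- split => //; apply/andP; split; first by rewrite size_rcons.
  by rewrite -/(wfall (n + m) cH) wfall_rcons w /= hh.
- rewrite csize_rcons /=; nia.
Qed.

Theorem proposition2p1 :
  exists c e : nat,
  forall (F : fieldType) (n m : nat) (Fs : 'I_m -> {mpoly F[n]})
         (C : {mpoly F[n + m]}) (s : nat),
    ips_certificate Fs C ->
    (forall i : 'I_m, exists cF : circuit F, computes cF (Fs i) /\ (csize cF <= s)%N) ->
    let D := max_deg_y C in
    let t := y_terms C in
    let T := (D * t * 'C(n, 2))%N in
    let B := (c * (D + t + n + s + 1) ^ e)%N in
    ((exists cC : circuit F, computes cC C /\ (csize cC <= s)%N) ->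
     card_ge F T ->
     exists (H : {mpoly F[n + m]}) (cH : circuit F),
       hilbert_like H /\ ips_certificate Fs H /\
       computes cH H /\ (csize cH <= B)%N)
    /\
    (forall k : nat,
     (exists cC : circuit F,
        [/\ computes cC C, (csize cC <= s)%N & mul_fanin_le k cC]) ->
     ~ card_ge F T ->
     exists (H : {mpoly F[n + m]}) (cH : circuit F),
       hilbert_like H /\ ips_certificate Fs H /\
       computes cH H /\ (csize cH <= B * (up_log 2 T) ^ k)%N).
Proof.
exists 15%N, 2%N => F n m Fs C s hips hFs D t T B.
have hB : (15 * (s + 1) ^ 2 <= B)%N.
  rewrite /B leq_mul2l /=; rewrite !expnS expn0 !muln1; nia.
split.
- move=> hC _; have [H [cH [h1 [h2 [h3 h4]]]]] := core hips hFs hC.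
  exists H, cH; do 3 (split => //); exact: leq_trans h4 hB.
- move=> k [cC [hc1 hc2 _]] hT.
  have [H [cH [h1 [h2 [h3 h4]]]]] := core hips hFs (ex_intro _ cC (conj hc1 hc2)).
  exists H, cH; do 3 (split => //).
  have T1 : (1 < T)%N.
    rewrite ltnNge; apply/negP => hT1; apply: hT.
    by exists [:: (0 : F)]; split.
  have up1 : (0 < up_log 2 T)%N by rewrite up_log_gt0 T1.
  apply: leq_trans (leq_trans h4 hB) _.
  by rewrite leq_pmulr // expn_gt0 up1.
Qed.
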